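(* Let $(\mathcal{E},\mathcal{L},\mathcal{B})$ be a weakly left resolving labelled space with associated inverse semigroup $S$. The maps \[(\alpha,\{\mathcal{F}_n\}_{n\ge0})\mapsto \bigcup_{n\ge0}\bigcup_{A\in\mathcal{F}_n}\uparrow(\alpha_{1,n},A,\alpha_{1,n})\] and $\xi\mapsto(\alpha,\{\xi_n\}_{n\ge0})$, where $\alpha\in\mathcal{L}^\infty$ is the infinite word of $\xi$ and $\xi_n=\{A\in\mathcal{B}:(\alpha_{1,n},A,\alpha_{1,n})\in\xi\}$, are mutually inverse bijections between the set of pairs $(\alpha,\{\mathcal{F}_n\}_{n\ge0})$ with $\alpha\in\mathcal{L}^\infty$ and $\{\mathcal{F}_n\}_{n\ge0}$ a complete family for $\alpha$, and the set of filters in $E(S)$ of infinite type.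
   Context: A directed graph $\mathcal{E}=(\mathcal{E}^0,\mathcal{E}^1,r,s)$ has countable nonempty vertex set, edge set, range/source maps; paths satisfy $r(\lambda_i)=s(\lambda_{i+1})$. A labelled graph has a surjective labelling $\mathcal{L}:\mathcal{E}^1\to\mathcal{A}$ extended letterwise to finite and infinite paths. $\omega$ is the empty word, $\mathcal{L}^+=\bigcup_{n\ge1}\mathcal{L}(\mathcal{E}^n)$, $\mathcal{L}^*=\{\omega\}\cup\mathcal{L}^+$, $\mathcal{L}^\infty$ the labels of infinite paths; $\alpha_{i,j}=\alpha_i\cdots\alpha_j$, $\alpha_{1,0}=\omega$. For $A\subseteq\mathcal{E}^0$, $\alpha\in\mathcal{L}^+$: $r(A,\alpha)=\{r(\lambda):\mathcal{L}(\lambda)=\alpha,\ s(\lambda)\in A\}$, $r(A,\omega)=A$, $r(\alpha)=r(\mathcal{E}^0,\alpha)$. $\mathcal{B}$ accommodating: closed under $r(\cdot,\alpha)$, finite intersections and unions, contains $r(\alpha)$ for $\alpha\in\mathcal{L}^+$; labelled space weakly left resolving if $r(A\cap B,\alpha)=r(A,\alpha)\cap r(B,\alpha)$ for $A,B\in\mathcal{B}$, $\alpha\in\mathcal{L}^+$. $\mathcal{B}_\alpha=\mathcal{B}\cap\mathcal{P}(r(\alpha))$. $S$ = triples $(\alpha,A,\beta)$, $\alpha,\beta\in\mathcal{L}^*$, $\emptyset\ne A\in\mathcal{B}_\alpha\cap\mathcal{B}_\beta$, plus $0$; product $(\alpha,A,\beta)(\gamma,B,\delta)=(\alpha\gamma',r(A,\gamma')\cap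 B,\delta)$ if $\gamma=\beta\gamma'$, $=(\alpha,A\cap r(B,\beta'),\delta\beta')$ if $\beta=\gamma\beta'$, $=0$ otherwise (empty middle entry identified with $0$). $E(S)=\{(\alpha,A,\alpha)\}\cup\{0\}$, $p\le q$ iff $pq=p$; $(\alpha,A,\alpha)\le(\beta,B,\beta)$ iff $\alpha=\beta\alpha'$ and $A\subseteq r(B,\alpha')$; $\uparrow x=\{y:x\le y\}$. A filter in a poset with least element $0$ is a nonempty upward-closed subset not containing $0$ in which any two elements have a common lower bound in it. The words of any two elements of a filter $\xi$ in $E(S)$ are comparable; $\xi$ is of infinite type if there is no longest word among the words $\beta$ with $(\beta,B,\beta)\in\xi$; then there is a unique $\alpha\in\mathcal{L}^\infty$ (the word of $\xi$) with every element of $\xi$ of the form $(\alpha_{1,n},A,\alpha_{1,n})$. A family $\{\mathcal{F}_n\}_{n\ge0}$ with $\mathcal{F}_n$ a filter in $\mathcal{B}_{\alpha_{1,n}}$ (under inclusion) for $n>0$ and $\mathcal{F}_0$ a filter in $\mathcal{B}$ or empty is complete for $\alpha$ if $\mathcal{F}_n=\{A\in\mathcal{B}_{\alpha_{1,n}}:r(A,\alpha_{n+1})\in\mathcal{F}_{n+1}\}$ for all $n\ge0$.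
   Formalization: The filters of infinite type in the bijection are only those ξ for which some α ∈ $\mathcal{L}^\infty$ has every element of ξ of the form $(\alpha_{1,n},A,\alpha_{1,n})$, and this α is taken as the word of ξ. Apart from conventions, each condition added here is assumed in the paper as well or is needed for the statement above to hold. *)

(* Defs.v *)
From Stdlib Require Import List Arith.
Import ListNotations.
Unset Implicit Arguments.

Record LGraph := {
  V : Type; Ed : Type; Al : Type;
  rg : Ed -> V; src : Ed -> V; lab : Ed -> Al }.

Definition vset (G : LGraph) := V G -> Prop.
Definition subset {X} (A C : X -> Prop) := forall x, A x -> C x.

Fixpoint is_path (G : LGraph) (p : list (Ed G)) : Prop :=
  match p with
  | [] => True
  | e :: q => match q with
              | [] => True
              | f :: _ => rg G e = src G f /\ is_path G q
              end
  end.

Definition is_inf_path (G : LGraph) (f : nat -> Ed G) : Prop :=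
  forall n, rg G (f n) = src G (f (S n)).

(* L^+ , L^* , L^infty ; infinite words are functions nat -> Al, alpha_{i+1} = alpha i *)
Definition Lplus (G : LGraph) (w : list (Al G)) : Prop :=
  exists e p, is_path G (e :: p) /\ map (lab G) (e :: p) = w.
Definition Lstar (G : LGraph) (w : list (Al G)) : Prop := w = [] \/ Lplus G w.
Definition Linf (G : LGraph) (a : nat -> Al G) : Prop :=
  exists f, is_inf_path G f /\ forall n, lab G (f n) = a n.

Definition pref {X} (a : nat -> X) (n : nat) : list X := map a (seq 0 n).

Definition relrange (G : LGraph) (A : vset G) (w : list (Al G)) : vset G :=
  match w with
  | [] => A
  | _ => fun v => exists e p, is_path G (e :: p) /\ map (lab G) (e :: p) = w
                              /\ A (src G e) /\ rg G (last p e) = v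
  end.

Definition rword (G : LGraph) (w : list (Al G)) : vset G := relrange G (fun _ => True) w.

Definition accommodating (G : LGraph) (B : vset G -> Prop) : Prop :=
  (forall A w, B A -> Lplus G w -> B (relrange G A w)) /\
  (forall A C, B A -> B C -> B (fun v => A v /\ C v)) /\
  (forall A C, B A -> B C -> B (fun v => A v \/ C v)) /\
  (forall w, Lplus G w -> B (rword G w)).

Definition weakly_left_resolving (G : LGraph) (B : vset G -> Prop) : Prop :=
  forall A C w, B A -> B C -> Lplus G w ->
    forall v, relrange G (fun x => A x /\ C x) w v <->
              (relrange G A w v /\ relrange G C w v).

Definition Bw (G : LGraph) (B : vset G -> Prop) (w : list (Al G)) (A : vset G) : Prop :=
  B A /\ subset A (rword G w).

Definition is_filter {X} (P : X -> Prop) (le : X -> X -> Prop) (zero : X -> Prop)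
  (F : X -> Prop) : Prop :=
  (exists x, F x) /\
  (forall x, F x -> P x) /\
  (forall x, F x -> ~ zero x) /\
  (forall x y, F x -> P y -> le x y -> F y) /\
  (forall x y, F x -> F y -> exists z, F z /\ le z x /\ le z y).

Definition filter_in_Bw (G : LGraph) (B : vset G -> Prop) (w : list (Al G))
  (F : vset G -> Prop) : Prop :=
  is_filter (Bw G B w) (@subset (V G)) (fun A => forall v, ~ A v) F.

(* E(S): None is 0, Some (alpha, A) is the idempotent (alpha, A, alpha) *)
Definition ES (G : LGraph) := option (list (Al G) * vset G).

Definition inES (G : LGraph) (B : vset G -> Prop) (x : ES G) : Prop :=
  match x with
  | None => True
  | Some (a, A) => Lstar G a /\ (exists v, A v) /\ Bw G B a A
  end.

Definition leES (G : LGraph) (x y : ES G) : Prop :=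
  match x, y with
  | None, _ => True
  | Some _, None => False
  | Some (a, A), Some (b, C) => exists a', a = b ++ a' /\ subset A (relrange G C a')
  end.

Definition filter_ES (G : LGraph) (B : vset G -> Prop) (xi : ES G -> Prop) : Prop :=
  is_filter (inES G B) (@leES G) (fun x => x = None) xi.

Definition upES (G : LGraph) (B : vset G -> Prop) (x : ES G) (y : ES G) : Prop :=
  inES G B y /\ leES G x y.

Definition infinite_type (G : LGraph) (xi : ES G -> Prop) : Prop :=
  forall b C, xi (Some (b, C)) ->
    exists c D, xi (Some (c, D)) /\ length b < length c.

Definition word_of (G : LGraph) (xi : ES G -> Prop) (a : nat -> Al G) : Prop :=
  Linf G a /\ forall x, xi x -> exists n A, x = Some (pref a n, A).

Definition complete_family (G : LGraph) (B : vset G -> Prop) (a : nat -> Al G)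
  (F : nat -> vset G -> Prop) : Prop :=
  (filter_in_Bw G B [] (F 0) \/ (forall A, ~ F 0 A)) /\
  (forall n, 0 < n -> filter_in_Bw G B (pref a n) (F n)) /\
  (forall n A, F n A <-> (Bw G B (pref a n) A /\ F (S n) (relrange G A [a n]))).

Definition Phi (G : LGraph) (B : vset G -> Prop) (a : nat -> Al G)
  (F : nat -> vset G -> Prop) : ES G -> Prop :=
  fun x => exists n A, F n A /\ upES G B (Some (pref a n, A)) x.

Definition xi_n (G : LGraph) (B : vset G -> Prop) (xi : ES G -> Prop) (a : nat -> Al G)
  : nat -> vset G -> Prop :=
  fun n A => B A /\ xi (Some (pref a n, A)).

Definition countable (X : Type) : Prop :=
  exists f : X -> nat, forall x y, f x = f y -> x = y.

(* Main.v *)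
Require Import Defs.
From Stdlib Require Import List Arith Lia Classical.
Import ListNotations.

Fixpoint reach (G:LGraph) (A : vset G) (w : list (Al G)) : vset G :=
  match w with
  | [] => A
  | x :: w' => reach G (fun v => exists e, lab G e = x /\ A (src G e) /\ rg G e = v) w'
  end.
Arguments reach {G}.

Lemma last_cons {X} (p : list X) (e f : X) : last (f::p) e = last p f.
Proof.
  revert e f. induction p as [|x p IH]; intros e f; [reflexivity|].
  change (last (x::p) e = last (x::p) f). rewrite !IH. reflexivity.
Qed.

Lemma relR_cons (G : LGraph) : forall w x (A : vset G) v,
  (exists e p, is_path G (e::p) /\ map (lab G) (e::p) = x::w /\ A (src G e) /\ rg G (last p e) = v)
  <-> reach A (x::w) v.
Proof.
  induction w as [|y w IH]; intros x A v.
  - split.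
    + intros [e [p [Hp [Hm [HA Hr]]]]]. destruct p as [|f p]; simpl in Hm.
      * inversion Hm; subst. simpl. exists e. auto.
      * inversion Hm.
    + simpl. intros [e [He [HA Hr]]]. exists e, []. simpl. subst. auto.
  - split.
    + intros [e [p [Hp [Hm [HA Hr]]]]]. destruct p as [|f p]; [inversion Hm|]. simpl in Hm. injection Hm as Hx Hy Hw.
      destruct Hp as [Hef Hp]. change (reach (fun v => exists e, lab G e = x /\ A (src G e) /\ rg G e = v) (y :: w) v).
      apply IH. exists f, p. rewrite last_cons in Hr.
      split; [exact Hp|]. split; [simpl; rewrite Hy, Hw; reflexivity|]. split; [exists e; auto| exact Hr].
    + intros H. change (reach (fun v => exists e, lab G e = x /\ A (src G e) /\ rg G e = v) (y :: w) v) in H.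
      apply IH in H. destruct H as [f [p [Hp [Hm [[e [He [HA Hr']]] Hr]]]]].
      exists e, (f::p). rewrite last_cons. split; [split; auto|]. split; [simpl; simpl in Hm; rewrite He, Hm; reflexivity|]. auto.
Qed.

Lemma relR (G : LGraph) (A : vset G) w v : relrange G A w v <-> reach A w v.
Proof. destruct w as [|x w]; [simpl; tauto|]. apply relR_cons. Qed.

Lemma reach_mono (G : LGraph) : forall w (A C : vset G), subset A C -> subset (reach A w) (reach C w).
Proof.
  induction w as [|x w IH]; intros A C H; simpl; auto.
  apply IH. intros v [e [He [HA Hr]]]. exists e; auto.
Qed.

Lemma reach_app (G : LGraph) : forall u w (A : vset G) v, reach A (u++w) v <-> reach (reach A u) w v.
Proof. induction u as [|x u IH]; intros w A v; simpl; [tauto| apply IH]. Qed.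

Lemma reach_ne (G : LGraph) : forall w (A : vset G) v, reach A w v -> exists x, A x.
Proof.
  induction w as [|x w IH]; intros A v H; simpl in H; [eauto|].
  apply IH in H. destruct H as [y [e [_ [HA _]]]]. eauto.
Qed.

Lemma rel_mono (G : LGraph) w (A C : vset G) : subset A C -> subset (relrange G A w) (relrange G C w).
Proof. intros H v Hv. apply relR. apply relR in Hv. eapply reach_mono; eauto. Qed.

Lemma rel_comp (G : LGraph) (A : vset G) u w v :
  relrange G (relrange G A u) w v <-> relrange G A (u++w) v.
Proof.
  rewrite relR, relR, reach_app. split; apply reach_mono; intros y; apply relR.
Qed.

Lemma rel_ne (G : LGraph) (A : vset G) w v : relrange G A w v -> exists x, A x.
Proof. rewrite relR. apply reach_ne. Qed.

Lemma sub_rword (G : LGraph) (X : vset G) u w :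
  subset X (rword G u) -> subset (relrange G X w) (rword G (u++w)).
Proof.
  intros HX v Hv. unfold rword. apply rel_comp. eapply rel_mono; eauto.
Qed.

Definition sub {X} (a : nat -> X) n k := map a (seq n k).

Lemma sub_add {X} (a : nat -> X) n k m : sub a n (k+m) = sub a n k ++ sub a (n+k) m.
Proof. unfold sub. rewrite seq_app, map_app. reflexivity. Qed.

Lemma pref_add {X} (a : nat -> X) n k : pref a (n+k) = pref a n ++ sub a n k.
Proof. exact (sub_add a 0 n k). Qed.

Lemma sub_len {X} (a : nat -> X) n k : length (sub a n k) = k.
Proof. unfold sub. rewrite length_map, length_seq. reflexivity. Qed.

Lemma pref_len {X} (a : nat -> X) n : length (pref a n) = n.
Proof. exact (sub_len a 0 n). Qed.

Lemma pref_prefix {X} (a : nat -> X) m n w :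
  pref a m = pref a n ++ w -> exists k, m = n + k /\ w = sub a n k.
Proof.
  intros H. assert (Hl : m = n + length w).
  { apply (f_equal (@length X)) in H. rewrite length_app, !pref_len in H. exact H. }
  exists (length w). split; auto. subst m. rewrite pref_add in H.
  apply app_inv_head in H. auto.
Qed.

Lemma pref_init {X} (a : nat -> X) n b w : pref a n = b ++ w -> b = pref a (length b).
Proof.
  intros H. assert (Hl : length b <= n).
  { apply (f_equal (@length X)) in H. rewrite length_app, !pref_len in H. lia. }
  replace n with (length b + (n - length b)) in H by lia.
  rewrite pref_add in H.
  assert (E := firstn_app_2 0 b w). rewrite <- H in E.
  rewrite <- (pref_len a (length b)) in E at 1. rewrite firstn_app_2 in E.
  simpl in E. rewrite !app_nil_r in E. auto.
Qed.

Lemma path_map (G : LGraph) f (Hf : is_inf_path G f) : forall k n, is_path G (map f (seq n k)).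
Proof.
  induction k as [|k IH]; intros n; [exact I|].
  destruct k as [|k]; [exact I|].
  specialize (IH (S n)). simpl in IH |- *. split; [apply Hf| exact IH].
Qed.

Lemma Lplus_sub (G : LGraph) a (Ha : Linf G a) n k : Lplus G (sub a n (S k)).
Proof.
  destruct Ha as [f [Hf Hl]]. exists (f n), (map f (seq (S n) k)).
  split; [exact (path_map G f Hf (S k) n)|].
  unfold sub. change (map (lab G) (map f (seq n (S k))) = map a (seq n (S k))).
  rewrite map_map. apply map_ext. auto.
Qed.

Lemma Lstar_pref (G : LGraph) a (Ha : Linf G a) n : Lstar G (pref a n).
Proof. destruct n; [left; reflexivity| right; apply (Lplus_sub G a Ha 0)]. Qed.

Lemma B_rel (G : LGraph) B a (Ha : Linf G a) (Hacc : accommodating G B) (A : vset G) n k :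
  B A -> B (relrange G A (sub a n k)).
Proof.
  intros HA. destruct k; [exact HA|]. apply Hacc; auto. apply Lplus_sub; auto.
Qed.

Lemma Bw_step (G : LGraph) B a (Ha : Linf G a) (Hacc : accommodating G B) (A : vset G) n k :
  Bw G B (pref a n) A -> Bw G B (pref a (n+k)) (relrange G A (sub a n k)).
Proof.
  intros [HB Hs]. split; [apply B_rel; auto|].
  rewrite pref_add. apply sub_rword; auto.
Qed.

Lemma leES_trans (G : LGraph) (x y z : ES G) : leES G x y -> leES G y z -> leES G x z.
Proof.
  destruct x as [[a A]|]; destruct y as [[b C]|]; destruct z as [[c D]|]; simpl; auto; try tauto.
  intros [a1 [E1 S1]] [a2 [E2 S2]]. exists (a2 ++ a1). split; [subst; rewrite app_assoc; auto|].
  intros v Hv. apply rel_comp. eapply rel_mono; [exact S2|]. auto.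
Qed.

Lemma leES_refl (G : LGraph) w (A : vset G) : leES G (Some (w, A)) (Some (w, A)).
Proof. simpl. exists []. rewrite app_nil_r. split; auto. intros v H; exact H. Qed.

Lemma inES_pref (G : LGraph) B a (Ha : Linf G a) n (A : vset G) :
  Bw G B (pref a n) A -> (exists v, A v) -> inES G B (Some (pref a n, A)).
Proof. intros. simpl. split; [apply Lstar_pref; auto| auto]. Qed.




Lemma F_filt (G : LGraph) B a F (HF : complete_family G B a F) m (A : vset G) :
  F m A -> filter_in_Bw G B (pref a m) (F m).
Proof.
  intros HA. destruct m as [|m].
  - destruct HF as [[H0|H0] _]; [exact H0| exfalso; eapply H0; eauto].
  - apply HF. lia.
Qed.

Lemma F_Bw (G : LGraph) B a F (HF : complete_family G B a F) m (A : vset G) :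
  F m A -> Bw G B (pref a m) A.
Proof. intros HA. destruct (F_filt G B a F HF m A HA) as [_ [H _]]. auto. Qed.

Lemma F_ne (G : LGraph) B a F (HF : complete_family G B a F) m (A : vset G) :
  F m A -> exists v, A v.
Proof.
  intros HA. destruct (F_filt G B a F HF m A HA) as [_ [_ [H _]]].
  apply not_all_not_ex. apply H. auto.
Qed.

Lemma F_up (G : LGraph) B a F (HF : complete_family G B a F) m (A Y : vset G) :
  F m A -> subset A Y -> Bw G B (pref a m) Y -> F m Y.
Proof.
  intros HA HS HY. destruct (F_filt G B a F HF m A HA) as [_ [_ [_ [H _]]]]. eauto.
Qed.

Lemma F_fwd (G : LGraph) B a F (Ha : Linf G a) (Hacc : accommodating G B)
  (HF : complete_family G B a F) n (A : vset G) :
  F n A -> forall k, F (n+k) (relrange G A (sub a n k)).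
Proof.
  intros HA k. induction k as [|k IH].
  - rewrite Nat.add_0_r. exact HA.
  - assert (HF' := HF). destruct HF' as [_ [_ Hc]]. apply Hc in IH. destruct IH as [_ IH].
    rewrite Nat.add_succ_r. eapply F_up; [exact HF| exact IH| |].
    + intros v Hv. apply rel_comp in Hv. replace (S k) with (k+1) by lia.
      rewrite sub_add. exact Hv.
    + rewrite <- Nat.add_succ_r. apply Bw_step; auto. eapply F_Bw; eauto.
Qed.

Lemma F_bwd (G : LGraph) B a F (Ha : Linf G a) (Hacc : accommodating G B)
  (HF : complete_family G B a F) :
  forall k n (A : vset G), F (n+k) (relrange G A (sub a n k)) -> Bw G B (pref a n) A -> F n A.
Proof.
  induction k as [|k IH]; intros n A H HB.
  - rewrite Nat.add_0_r in H. exact H.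
  - assert (HF' := HF). destruct HF' as [_ [_ Hc]]. apply Hc. split; [exact HB|].
    
    assert (H1 : Bw G B (pref a (S n)) (relrange G A [a n])).
    { assert (X := Bw_step G B a Ha Hacc A n 1 HB). rewrite Nat.add_1_r in X. exact X. }
    apply IH.
    + rewrite Nat.add_succ_r in H. eapply F_up; [exact HF| exact H| |].
      * intros v Hv. apply rel_comp. exact Hv.
      * apply (Bw_step G B a Ha Hacc _ (S n) k). exact H1.
    + exact H1.
Qed.

Lemma part1 (G : LGraph) B a F (Ha : Linf G a) (Hacc : accommodating G B)
  (HF : complete_family G B a F) :
      filter_ES G B (Phi G B a F) /\ infinite_type G (Phi G B a F) /\
      word_of G (Phi G B a F) a /\
      (forall n A, xi_n G B (Phi G B a F) a n A <-> F n A).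
Proof.
  assert (Hmem : forall n A, F n A -> Phi G B a F (Some (pref a n, A))).
  { intros n A HA. exists n, A. split; [exact HA|]. split; [|apply leES_refl].
    apply inES_pref; auto; [eapply F_Bw| eapply F_ne]; eauto. }
  split; [|split; [|split]].
  - split; [|split; [|split; [|split]]].
    + assert (HF1 : filter_in_Bw G B (pref a 1) (F 1)) by (apply HF; lia).
      destruct HF1 as [[A HA] _]. eexists. apply Hmem. exact HA.
    + intros x [n [A [_ [H _]]]]. exact H.
    + intros x [n [A [_ [_ H]]]] E. subst x. exact H.
    + intros x y [n [A [HA [_ H1]]]] Hy H2. exists n, A. split; [exact HA|].
      split; [exact Hy|]. eapply leES_trans; eauto.
    + intros x y [n [A [HA [_ Hx]]]] [m [C [HC [_ Hy]]]].
      assert (H1 := F_fwd G B a F Ha Hacc HF n A HA (S m)).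
      assert (H2 := F_fwd G B a F Ha Hacc HF m C HC (S n)).
      replace (m + S n) with (n + S m) in H2 by lia.
      destruct (F_filt G B a F HF _ _ H1) as [_ [_ [_ [_ Hmeet]]]].
      destruct (Hmeet _ _ H1 H2) as [D [HD [HD1 HD2]]].
      exists (Some (pref a (n + S m), D)). split; [apply Hmem; exact HD|].
      split.
      * eapply leES_trans; [|exact Hx]. simpl. exists (sub a n (S m)).
        split; [apply pref_add| exact HD1].
      * eapply leES_trans; [|exact Hy]. simpl. exists (sub a m (S n)).
        replace (n + S m) with (m + S n) by lia.
        split; [apply pref_add| exact HD2].
  - intros b C [n [A [HA [_ Hle]]]]. simpl in Hle. destruct Hle as [a' [Ea _]].
    assert (H1 := F_fwd G B a F Ha Hacc HF n A HA 1).
    exists (pref a (n+1)), (relrange G A (sub a n 1)). split; [apply Hmem; exact H1|].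
    apply (f_equal (@length _)) in Ea. rewrite length_app, pref_len in Ea.
    rewrite pref_len. lia.
  - split; [exact Ha|]. intros x [n [A [HA [_ Hle]]]].
    destruct x as [[b C]|]; [|contradiction]. simpl in Hle. destruct Hle as [a' [Ea _]].
    exists (length b), C. rewrite <- (pref_init a n b a' Ea). reflexivity.
  - intros n A. split.
    + intros [HB [m [A' [HA' [Hin Hle]]]]]. simpl in Hle. destruct Hle as [a' [Ea Hs]].
      destruct (pref_prefix a m n a' Ea) as [k [Em Ea']]. subst m a'.
      destruct Hin as [_ [_ HBw]].
      eapply (F_bwd G B a F Ha Hacc HF k); [|exact HBw].
      eapply F_up; [exact HF| exact HA'| exact Hs|]. apply Bw_step; auto.
    + intros HA. split; [eapply F_Bw; eauto|]. apply Hmem. exact HA.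
Qed.

Lemma part2 (G : LGraph) B (Hacc : accommodating G B) (Hwlr : weakly_left_resolving G B)
  (xi : ES G -> Prop) a :
      filter_ES G B xi -> infinite_type G xi -> word_of G xi a ->
      complete_family G B a (xi_n G B xi a) /\
      (forall x, Phi G B a (xi_n G B xi a) x <-> xi x).
Proof.
  intros Hf Hinf [Ha Hw].
  destruct Hf as [Hne [HP [Hz [Hup Hmeet]]]].
  assert (Hdeep : forall n, exists k D, n <= k /\ xi (Some (pref a k, D))).
  { induction n as [|n IH].
    - destruct Hne as [x Hx]. destruct (Hw x Hx) as [k [D E]]. subst x. exists k, D. split; [lia|auto].
    - destruct IH as [k [D [Hk HD]]]. destruct (Hinf _ _ HD) as [c [D' [HD' Hl]]].
      destruct (Hw _ HD') as [k' [D'' E]]. injection E as E1 E2. subst c.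
      rewrite !pref_len in Hl. exists k', D'. split; [lia| exact HD']. }
  assert (Hmeet2 : forall n A C, xi (Some (pref a n, A)) -> xi (Some (pref a n, C)) ->
            xi (Some (pref a n, fun v => A v /\ C v))).
  { intros n A C HA HC. destruct (Hmeet _ _ HA HC) as [z [Hz' [Hz1 Hz2]]].
    destruct (Hw _ Hz') as [k [D E]]. subst z.
    simpl in Hz1, Hz2. destruct Hz1 as [a1 [E1 S1]]. destruct Hz2 as [a2 [E2 S2]].
    rewrite E1 in E2. apply app_inv_head in E2. subst a2.
    destruct (pref_prefix a k n a1 E1) as [j [Ek Ea1]]. subst a1.
    assert (HinA := HP _ HA). assert (HinC := HP _ HC). assert (Hinz := HP _ Hz').
    destruct HinA as [_ [_ [HBA HsA]]]. destruct HinC as [_ [_ [HBC _]]].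
    destruct Hinz as [_ [[v0 Hv0] _]].
    assert (Hsub : subset D (relrange G (fun v => A v /\ C v) (sub a n j))).
    { intros v Hv. destruct j as [|j].
      - simpl in S1, S2 |- *. auto.
      - apply Hwlr; auto. apply Lplus_sub; auto. }
    eapply Hup; [exact Hz'| |].
    - apply inES_pref; auto.
      + split; [apply Hacc; auto|]. intros v [Hv _]. auto.
      + apply Hsub in Hv0. apply rel_ne in Hv0. exact Hv0.
    - simpl. exists (sub a n j). split; [rewrite Ek; apply pref_add| exact Hsub]. }
  assert (Hstep : forall n A, xi (Some (pref a n, A)) -> xi (Some (pref a (S n), relrange G A [a n]))).
  { intros n A HA. destruct (Hdeep (S n)) as [k [D [Hk HD]]].
    destruct (Hmeet _ _ HA HD) as [z [Hz' [Hz1 Hz2]]].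
    destruct (Hw _ Hz') as [j [E Ez]]. subst z.
    simpl in Hz1, Hz2. destruct Hz1 as [a1 [E1 S1]]. destruct Hz2 as [a2 [E2 _]].
    destruct (pref_prefix a j n a1 E1) as [i [Ej Ea1]]. subst a1.
    destruct (pref_prefix a j k a2 E2) as [i' [Ej' _]].
    destruct i as [|i]; [lia|].
    assert (HinA := HP _ HA). destruct HinA as [_ [_ HBw]].
    assert (Hinz := HP _ Hz'). destruct Hinz as [_ [[v0 Hv0] _]].
    assert (Hsub : subset E (relrange G (relrange G A [a n]) (sub a (S n) i))).
    { intros v Hv. apply rel_comp. apply S1. exact Hv. }
    eapply Hup; [exact Hz'| |].
    - apply inES_pref; auto.
      + assert (X := Bw_step G B a Ha Hacc A n 1 HBw). rewrite Nat.add_1_r in X. exact X.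
      + apply Hsub in Hv0. apply rel_ne in Hv0. exact Hv0.
    - simpl. exists (sub a (S n) i). split; [|exact Hsub].
      rewrite Ej. replace (n + S i) with (S n + i) by lia. exact (pref_add a (S n) i). }
  assert (Hfilt : forall n, (exists A, xi_n G B xi a n A) -> filter_in_Bw G B (pref a n) (xi_n G B xi a n)).
  { intros n Hex. split; [exact Hex|]. split; [|split; [|split]].
    - intros A [_ HA]. destruct (HP _ HA) as [_ [_ H]]. exact H.
    - intros A [_ HA] H0. destruct (HP _ HA) as [_ [[v Hv] _]]. exact (H0 v Hv).
    - intros X Y [_ HX] HY HXY. split; [apply HY|].
      eapply Hup; [exact HX| |].
      + apply inES_pref; auto. destruct (HP _ HX) as [_ [[v Hv] _]]. eauto.
      + simpl. exists []. rewrite app_nil_r. split; auto.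
    - intros X Y [HBX HX] [HBY HY]. exists (fun v => X v /\ Y v).
      split; [split; [apply Hacc; auto| apply Hmeet2; auto]|].
      split; intros v [H1 H2]; auto. }
  assert (HC : complete_family G B a (xi_n G B xi a)).
  { split; [|split].
    - destruct (classic (exists A, xi_n G B xi a 0 A)) as [H|H].
      + left. apply Hfilt. exact H.
      + right. intros A HA. apply H. eauto.
    - intros n Hn. apply Hfilt. destruct (Hdeep n) as [k [D [Hk HD]]].
      destruct (pref_prefix a k n (sub a n (k - n))) as [i [Ei Esub]].
      { replace k with (n + (k - n)) at 1 by lia. apply pref_add. }
      assert (HLn : Lplus G (pref a n)).
      { destruct n as [|n]; [lia|]. exact (Lplus_sub G a Ha 0 n). }
      assert (HBr : B (rword G (pref a n))) by (apply Hacc; exact HLn).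
      destruct (HP _ HD) as [_ [[v0 Hv0] [_ HsD]]].
      assert (Hsub : subset D (relrange G (rword G (pref a n)) (sub a n (k - n)))).
      { intros v Hv. unfold rword. apply rel_comp. rewrite <- pref_add.
        replace (n + (k - n)) with k by lia. apply HsD. exact Hv. }
      exists (rword G (pref a n)). split; [exact HBr|].
      eapply Hup; [exact HD| |].
      + apply inES_pref; auto.
        * split; [exact HBr| intros v Hv; exact Hv].
        * apply Hsub in Hv0. apply rel_ne in Hv0. exact Hv0.
      + simpl. exists (sub a n (k - n)). split; [|exact Hsub].
        rewrite <- pref_add. f_equal. lia.
    - intros n A. split.
      + intros [HB HA]. destruct (HP _ HA) as [_ [_ HBw]]. split; [exact HBw|].
        split; [|apply Hstep; exact HA].
        apply Hacc; auto. exact (Lplus_sub G a Ha n 0).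
      + intros [HBw [_ HA1]]. split; [apply HBw|].
        eapply Hup; [exact HA1| |].
        * apply inES_pref; auto. destruct (HP _ HA1) as [_ [[v Hv] _]].
          apply rel_ne in Hv. exact Hv.
        * simpl. exists [a n]. split; [|intros v Hv; exact Hv].
          rewrite <- Nat.add_1_r. exact (pref_add a n 1). }
  split; [exact HC|].
  intros x. split.
  - intros [n [A [[_ HA] [Hx Hle]]]]. eapply Hup; eauto.
  - intros Hx. destruct (Hw _ Hx) as [n [A E]]. subst x.
    destruct (HP _ Hx) as [_ [_ [HB _]]].
    exists n, A. split; [split; auto|]. split; [apply HP; exact Hx| apply leES_refl].
Qed.

Theorem mainTheorem8 (G : LGraph) (B : vset G -> Prop)
  (HV : inhabited (V G)) (HVc : countable (V G)) (HEc : countable (Ed G))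
  (Hsurj : forall l : Al G, exists e, lab G e = l)
  (Hacc : accommodating G B) (Hwlr : weakly_left_resolving G B) :
  (forall (a : nat -> Al G) (F : nat -> vset G -> Prop),
      Linf G a -> complete_family G B a F ->
      filter_ES G B (Phi G B a F) /\ infinite_type G (Phi G B a F) /\
      word_of G (Phi G B a F) a /\
      (forall n A, xi_n G B (Phi G B a F) a n A <-> F n A)) /\
  (forall (xi : ES G -> Prop) (a : nat -> Al G),
      filter_ES G B xi -> infinite_type G xi -> word_of G xi a ->
      complete_family G B a (xi_n G B xi a) /\
      (forall x, Phi G B a (xi_n G B xi a) x <-> xi x)).
Proof.
  split.
  - intros a F Ha HF. apply part1; auto.
  - intros xi a. apply part2; auto.
Qed.
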